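(* Let $a,b,c\in\mathbb{R}$ with $c\neq0$. Let $\theta_\pm$ be the roots of the quadratic $-3c\theta^2+\sqrt3(a-b)\theta+(a+b+c)$, and let $\theta_1,\theta_2,\theta_3$ be the roots of the cubic $-3c\theta^3+\sqrt3(a-b)\theta^2+(4a+4b+c)\theta+\sqrt3(a-b)$, assumed pairwise distinct. For $(u,v,w)$ with $u,v,w$ pairwise distinct put $\theta(u,v,w)=\frac{u+v-2w}{\sqrt3(u-v)}$, and let $\Omega\subset\mathbb{R}^3$ be a connected open set on which $u,v,w$ are pairwise distinct and $\theta\neq\theta_1,\theta_2,\theta_3$, with continuous branches of the logarithms below chosen on $\Omega$. Define $$\begin{aligned}h(u,v,w)={}&(\theta_1-\theta_2)(\theta_2-\theta_3)(\theta_3-\theta_1)\ln\frac{u-v}{\sqrt2}\\&-(\theta_1-\theta_+)(\theta_2-\theta_3)(\theta_1-\theta_-)\ln(\theta-\theta_1)\\&-(\theta_2-\theta_+)(\theta_2-\theta_-)(\theta_3-\theta_1)\ln(\theta-\theta_2)\\&-(\theta_1-\theta_2)(\theta_3-\theta_+)(\theta_3-\theta_-)\ln(\theta-\theta_3).\end{aligned}$$ Then $h$ is constant along every solution curve contained in $\Omega$ of $$u'=\frac{c}{u-v}+\frac{b}{u-w},\quad v'=\frac{a}{v-w}+\frac{c}{v-u},\quad w'=\frac{b}{w-u}+\frac{a}{w-v}.$$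
   Context: The roots $\theta_\pm,\theta_i$ may be complex, in which case $h$ is complex-valued and the logarithms are continuous complex branches on $\Omega$. *)

(* Defs.v *)
From Stdlib Require Import Reals.
From Coquelicot Require Import Coquelicot.
Open Scope R_scope.

Definition pt3 := (R * R * R)%type.
Definition pu (p : pt3) : R := fst (fst p).
Definition pv (p : pt3) : R := snd (fst p).
Definition pw (p : pt3) : R := snd p.

Definition theta (p : pt3) : R :=
  (pu p + pv p - 2 * pw p) / (sqrt 3 * (pu p - pv p)).

Definition cexp (z : C) : C :=
  (exp (Re z) * cos (Im z), exp (Re z) * sin (Im z)).

Definition log_branch (D : pt3 -> Prop) (f : pt3 -> C) (L : pt3 -> C) : Prop :=
  forall p, D p -> continuous L p /\ cexp (L p) = f p.

Definition connected3 (D : pt3 -> Prop) : Prop :=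
  forall A B : pt3 -> Prop, open A -> open B ->
    (forall p, D p -> A p \/ B p) ->
    (forall p, D p -> A p -> B p -> False) ->
    (exists p, D p /\ A p) -> (exists p, D p /\ B p) -> False.

(* the function h, built from chosen branches L0..L3 of the logarithms of
   (u-v)/sqrt 2, theta-theta1, theta-theta2, theta-theta3 *)
Definition hfun (tp tm t1 t2 t3 : C) (L0 L1 L2 L3 : pt3 -> C) (p : pt3) : C :=
  ((t1 - t2) * (t2 - t3) * (t3 - t1) * L0 p
   - (t1 - tp) * (t2 - t3) * (t1 - tm) * L1 p
   - (t2 - tp) * (t2 - tm) * (t3 - t1) * L2 p
   - (t1 - t2) * (t3 - tp) * (t3 - tm) * L3 p)%C.

(* Main.v *)
Require Import Defs.
From Stdlib Require Import Reals Lra Nsatz.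
From Coquelicot Require Import Coquelicot.
Open Scope R_scope.
Ltac toR := match goal with |- ?a = ?b => change (@eq R a b) end.

Lemma logd (gx gy lx ly : R -> R) (t gx' gy' : R) :
  is_derive gx t gx' -> is_derive gy t gy' ->
  0 < gx t ^2 + gy t ^2 ->
  continuous ly t ->
  locally t (fun s => exp (lx s) * cos (ly s) = gx s /\ exp (lx s) * sin (ly s) = gy s) ->
  is_derive lx t ((gx' * gx t + gy' * gy t)/(gx t^2 + gy t^2)) /\
  is_derive ly t ((gy' * gx t - gx' * gy t)/(gx t^2 + gy t^2)).
Proof.
intros Hx Hy Hp Hc Hloc.
assert (Hxy : forall s, exp (lx s) * cos (ly s) = gx s /\ exp (lx s) * sin (ly s) = gy s ->
   gx s ^2 + gy s ^2 = exp (lx s) ^ 2).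
{ intros s [E1 E2]. rewrite <- E1, <- E2.
  pose proof (sin2_cos2 (ly s)). unfold Rsqr in H. nra. }
assert (DX : Derive (fun x : R => gx x) t = gx') by (apply is_derive_unique; exact Hx).
assert (DY : Derive (fun x : R => gy x) t = gy') by (apply is_derive_unique; exact Hy).
split.
- apply is_derive_ext_loc with (fun s => ln (gx s ^2 + gy s^2) / 2).
  + apply filter_imp with (2 := Hloc). intros s Hs. rewrite (Hxy s Hs).
    replace (exp (lx s) ^ 2) with (exp (2 * lx s)).
    * rewrite ln_exp. toR. field.
    * replace (2 * lx s) with (lx s + lx s) by ring. rewrite exp_plus. ring.
  + auto_derive.
    * repeat split; try (eexists; eassumption). nra.
    * rewrite DX, DY. toR. field. lra.
- set (a := ly t).
  assert (Hb : locally t (fun s => Rabs (ly s - a) < PI / 2)).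
  { assert (HP : 0 < PI / 2) by (pose proof PI_RGT_0; lra).
    apply (Hc (fun y => Rabs (y - a) < PI/2)).
    exists (mkposreal _ HP). intros y Hy'. exact Hy'. }
  apply is_derive_ext_loc with
    (fun s => a + atan ((gy s * gx t - gx s * gy t) / (gx s * gx t + gy s * gy t))).
  + apply filter_imp with (2 := filter_and _ _ Hloc Hb).
    intros s [[E1 E2] Hs].
    assert (Ht : exp (lx t) * cos a = gx t /\ exp (lx t) * sin a = gy t).
    { apply locally_singleton in Hloc. exact Hloc. }
    destruct Ht as [F1 F2].
    set (d := ly s - a).
    assert (Hd : - (PI/2) < d < PI/2) by (unfold d; apply Rabs_def2 in Hs; lra).
    assert (Hcd : 0 < cos d) by (apply cos_gt_0; lra).
    assert (Q1 : gx s * gx t + gy s * gy t = exp (lx s) * exp (lx t) * cos d).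
    { unfold d. rewrite cos_minus, <- E1, <- E2, <- F1, <- F2. ring. }
    assert (Q2 : gy s * gx t - gx s * gy t = exp (lx s) * exp (lx t) * sin d).
    { unfold d. rewrite sin_minus, <- E1, <- E2, <- F1, <- F2. ring. }
    rewrite Q1, Q2.
    pose proof (exp_pos (lx s)). pose proof (exp_pos (lx t)).
    replace (exp (lx s) * exp (lx t) * sin d / (exp (lx s) * exp (lx t) * cos d)) with (tan d).
    * rewrite atan_tan by lra. unfold d; toR; ring.
    * unfold tan. toR; field. split; try lra.
  + auto_derive.
    * repeat split; try (eexists; eassumption). nra.
    * rewrite DX, DY. toR.
      field. split; try lra. nra.
Qed.

Definition cder (f : R -> C) (t : R) (z : C) : Prop :=
  is_derive (fun s => fst (f s)) t (fst z) /\ is_derive (fun s => snd (f s)) t (snd z).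

Lemma cder_minus f g t a b : cder f t a -> cder g t b -> cder (fun s => (f s - g s)%C) t (a - b)%C.
Proof.
intros [F1 F2] [G1 G2]; split.
- apply is_derive_ext with (fun s => fst (f s) - fst (g s)).
  + intro s. simpl. toR. ring.
  + replace (fst (a - b)%C) with (fst a - fst b) by (simpl; ring).
    exact (is_derive_minus _ _ _ _ _ F1 G1).
- apply is_derive_ext with (fun s => snd (f s) - snd (g s)).
  + intro s. simpl. toR. ring.
  + replace (snd (a - b)%C) with (snd a - snd b) by (simpl; ring).
    exact (is_derive_minus _ _ _ _ _ F2 G2).
Qed.

Lemma cder_cmul (K : C) f t a : cder f t a -> cder (fun s => (K * f s)%C) t (K * a)%C.
Proof.
intros [F1 F2]; split.
- apply is_derive_ext with (fun s => fst K * fst (f s) - snd K * snd (f s)).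
  + intro s. simpl. toR. ring.
  + replace (fst (K * a)%C) with (fst K * fst a - snd K * snd a) by (simpl; ring).
    exact (is_derive_minus _ _ _ _ _ (is_derive_scal _ _ (fst K) _ F1) (is_derive_scal _ _ (snd K) _ F2)).
- apply is_derive_ext with (fun s => fst K * snd (f s) + snd K * fst (f s)).
  + intro s. simpl. toR. ring.
  + replace (snd (K * a)%C) with (fst K * snd a + snd K * fst a) by (simpl; ring).
    exact (is_derive_plus _ _ _ _ _ (is_derive_scal _ _ (fst K) _ F2) (is_derive_scal _ _ (snd K) _ F1)).
Qed.

Lemma cdiv_fst (a b x y : R) : 0 < x^2+y^2 ->
  fst ((a, b) / (x, y))%C = (a * x + b * y)/(x^2+y^2).
Proof. intros H. simpl. toR. field. lra. Qed.
Lemma cdiv_snd (a b x y : R) : 0 < x^2+y^2 ->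
  snd ((a, b) / (x, y))%C = (b * x - a * y)/(x^2+y^2).
Proof. intros H. simpl. toR. field. lra. Qed.



Lemma clogd (g l : R -> C) t (g' : C) :
  cder g t g' -> g t <> 0%C -> continuous (fun s => snd (l s)) t ->
  locally t (fun s => cexp (l s) = g s) -> cder l t (g' / g t)%C.
Proof.
intros [H1 H2] Hn Hc Hl.
assert (Hp : 0 < fst (g t) ^ 2 + snd (g t) ^ 2).
{ destruct (g t) as [x y]; simpl.
  destruct (Req_dec x 0) as [hx|hx]; destruct (Req_dec y 0) as [hy|hy];
    [subst; exfalso; apply Hn; reflexivity | nra | nra | nra]. }
destruct (logd (fun s => fst (g s)) (fun s => snd (g s)) (fun s => fst (l s)) (fun s => snd (l s)) t (fst g') (snd g') H1 H2 Hp Hc) as [D1 D2].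
{ apply filter_imp with (2:=Hl). intros s Hs. unfold cexp in Hs. rewrite <- Hs. simpl. split; reflexivity. }
split.
- rewrite (surjective_pairing g'), (surjective_pairing (g t)), cdiv_fst by exact Hp. exact D1.
- rewrite (surjective_pairing g'), (surjective_pairing (g t)), cdiv_snd by exact Hp. exact D2.
Qed.

Lemma cont_pair {U V W : UniformSpace} (f : U -> V) (g : U -> W) x :
  continuous f x -> continuous g x -> continuous (fun y => (f y, g y)) x.
Proof.
intros Hf Hg P [eps HP]. change (locally x (fun y => P (f y, g y))).
apply filter_imp with (fun y => ball (f x) eps (f y) /\ ball (g x) eps (g y)).
- intros y [A B]. apply HP. split; assumption.
- apply filter_and; [apply Hf | apply Hg]; apply locally_ball.
Qed.

Lemma const_on (f : R -> R) a b : (forall x, a < x < b -> is_derive f x 0) ->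
  forall s t, a < s < b -> a < t < b -> f s = f t.
Proof.
intros H.
assert (K: forall s t, a<s<b -> a<t<b -> s < t -> f s = f t).
{ intros s t Hs Ht Hst. destruct (MVT_cor2 f (fun _ => 0) s t Hst) as [c [Hc _]].
  - intros c Hc. apply is_derive_Reals. apply H. lra.
  - lra. }
intros s t Hs Ht. destruct (Rtotal_order s t) as [h|[h|h]].
- apply K; auto.
- subst; auto.
- symmetry; apply K; auto.
Qed.

Lemma cder_eq f t z z' : cder f t z -> z = z' -> cder f t z'.
Proof. intros H E; rewrite <- E; exact H. Qed.

Lemma Cminus_eq0 (z w : C) : (z - w)%C = 0%C -> z = w.
Proof. intros H. replace z with ((z - w) + w)%C by ring. rewrite H. ring. Qed.
Lemma R1 (a b c u v w : R)
  (h1 : u - v <> 0) (h2 : u - w <> 0) (h3 : v - w <> 0) :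
  let U' := c / (u - v) + b / (u - w) in
  let V' := a / (v - w) + c / (v - u) in
  let W' := b / (w - u) + a / (w - v) in
  let X := (U' - V')/(u-v) in
  let r := (u+v-2*w) / (3 * (u - v)) in
  let r' := ((U'+V'-2*W')*(u-v) - (u+v-2*w)*(U'-V')) / (3 * (u - v)^2) in
  X * (-9*c*r*r*r + 3*(a-b)*r*r + (4*a+4*b+c)*r + (a-b))
  + r' * (-9*c*r*r + 3*(a-b)*r + (a+b+c)) = 0.
Proof.
cbv zeta.
assert (v - u <> 0) by (intro; apply h1; lra).
assert (w - u <> 0) by (intro; apply h2; lra).
assert (w - v <> 0) by (intro; apply h3; lra).
field. repeat split; auto.
Qed.
Lemma quads (a b c s r : R) (hs : s * s = 3) :
  -3*c*(s*r)*(s*r) + s*(a-b)*(s*r) + (a+b+c) = -9*c*r*r + 3*(a-b)*r + (a+b+c).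
Proof. nsatz. Qed.
Lemma cubs (a b c s r : R) (hs : s * s = 3) :
  -3*c*(s*r)*(s*r)*(s*r) + s*(a-b)*(s*r)*(s*r) + (4*a+4*b+c)*(s*r) + s*(a-b)
   = s * (-9*c*r*r*r + 3*(a-b)*r*r + (4*a+4*b+c)*r + (a-b)).
Proof. nsatz. Qed.

Lemma HR (a b c u v w : R)
  (h1 : u - v <> 0) (h2 : u - w <> 0) (h3 : v - w <> 0) :
  let s := sqrt 3 in
  let U' := c / (u - v) + b / (u - w) in
  let V' := a / (v - w) + c / (v - u) in
  let W' := b / (w - u) + a / (w - v) in
  let X := (U' - V')/(u-v) in
  let th := (u + v - 2 * w) / (s * (u - v)) in
  let T := ((U'+V'-2*W')*(s*(u-v)) - (u+v-2*w)*(s*(U'-V')))/(s*(u-v))^2 in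
  X * (-3*c*th*th*th + s*(a-b)*th*th + (4*a+4*b+c)*th + s*(a-b))
  + T * (-3*c*th*th + s*(a-b)*th + (a+b+c)) = 0.
Proof.
intros s U' V' W' X th T.
assert (hs : s * s = 3) by (unfold s; apply sqrt_sqrt; lra).
assert (hs0 : s <> 0) by (intro E; rewrite E in hs; lra).
pose proof (R1 a b c u v w h1 h2 h3) as E. cbv zeta in E. fold U' V' W' X in E.
set (r := (u+v-2*w) / (3 * (u - v))) in E.
set (r' := ((U'+V'-2*W')*(u-v) - (u+v-2*w)*(U'-V')) / (3 * (u - v)^2)) in E.
assert (Eth : th = s * r).
{ unfold th, r. rewrite <- hs. field. split; auto. }
assert (ET : T = s * r').
{ unfold T, r'. rewrite <- hs. field. split; auto. }
rewrite Eth, ET, quads, cubs by exact hs.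
transitivity (s * (X * (-9*c*r*r*r + 3*(a-b)*r*r + (4*a+4*b+c)*r + (a-b))
  + r' * (-9*c*r*r + 3*(a-b)*r + (a+b+c)))); [ring|].
rewrite E. ring.
Qed.

Lemma Cfinal (a b c th X T : R) (tp tm t1 t2 t3 : C) (hc : c <> 0)
  (Hquad : forall z : C,
     (RtoC (-3 * c) * z * z + RtoC (sqrt 3 * (a - b)) * z + RtoC (a + b + c))%C
     = (RtoC (-3 * c) * (z - tp) * (z - tm))%C)
  (Hcubic : forall z : C,
     (RtoC (-3 * c) * z * z * z + RtoC (sqrt 3 * (a - b)) * z * z
      + RtoC (4 * a + 4 * b + c) * z + RtoC (sqrt 3 * (a - b)))%C
     = (RtoC (-3 * c) * (z - t1) * (z - t2) * (z - t3))%C)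
  (HR : X * (-3*c*th*th*th + sqrt 3*(a-b)*th*th + (4*a+4*b+c)*th + sqrt 3*(a-b))
        + T * (-3*c*th*th + sqrt 3*(a-b)*th + (a+b+c)) = 0)
  (e1 : RtoC th <> t1) (e2 : RtoC th <> t2) (e3 : RtoC th <> t3) :
  ((t1 - t2) * (t2 - t3) * (t3 - t1) * RtoC X
   - (t1 - tp) * (t2 - t3) * (t1 - tm) * (RtoC T / (RtoC th - t1))
   - (t2 - tp) * (t2 - tm) * (t3 - t1) * (RtoC T / (RtoC th - t2))
   - (t1 - t2) * (t3 - tp) * (t3 - tm) * (RtoC T / (RtoC th - t3)))%C = 0%C.
Proof.
set (Th := RtoC th).
assert (HRC : (RtoC X * (RtoC (-3 * c) * Th * Th * Th + RtoC (sqrt 3 * (a - b)) * Th * Th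
      + RtoC (4 * a + 4 * b + c) * Th + RtoC (sqrt 3 * (a - b)))
   + RtoC T * (RtoC (-3 * c) * Th * Th + RtoC (sqrt 3 * (a - b)) * Th + RtoC (a + b + c)))%C = 0%C).
{ transitivity (RtoC (X * (-3*c*th*th*th + sqrt 3*(a-b)*th*th + (4*a+4*b+c)*th + sqrt 3*(a-b))
        + T * (-3*c*th*th + sqrt 3*(a-b)*th + (a+b+c)))).
  - unfold Th. apply injective_projections; simpl; toR; ring.
  - rewrite HR. reflexivity. }
rewrite Hquad, Hcubic in HRC.
assert (f1 : (Th - t1)%C <> 0%C) by (intro H; apply e1, Cminus_eq0, H).
assert (f2 : (Th - t2)%C <> 0%C) by (intro H; apply e2, Cminus_eq0, H).
assert (f3 : (Th - t3)%C <> 0%C) by (intro H; apply e3, Cminus_eq0, H).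
assert (fc : RtoC (-3 * c) <> 0%C) by (intro H; apply (f_equal fst) in H; simpl in H; lra).
match goal with |- ?G = _ =>
  assert (Key : (G * (RtoC (-3 * c) * (Th - t1) * (Th - t2) * (Th - t3)))%C
     = ((t1 - t2) * (t2 - t3) * (t3 - t1) *
        (RtoC X * (RtoC (-3 * c) * (Th - t1) * (Th - t2) * (Th - t3)) +
         RtoC T * (RtoC (-3 * c) * (Th - tp) * (Th - tm))))%C)
  by (field; repeat split; auto);
  rewrite HRC, Cmult_0_r in Key;
  replace G with ((G * (RtoC (-3 * c) * (Th - t1) * (Th - t2) * (Th - t3)))
                  / (RtoC (-3 * c) * (Th - t1) * (Th - t2) * (Th - t3)))%C
    by (field; repeat split; auto)
end.
rewrite Key. field. repeat split; auto.
Qed.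

Theorem mainTheorem9
  (a b c : R) (hc : c <> 0)
  (tp tm t1 t2 t3 : C)
  (Hquad : forall z : C,
     (RtoC (-3 * c) * z * z + RtoC (sqrt 3 * (a - b)) * z + RtoC (a + b + c))%C
     = (RtoC (-3 * c) * (z - tp) * (z - tm))%C)
  (Hcubic : forall z : C,
     (RtoC (-3 * c) * z * z * z + RtoC (sqrt 3 * (a - b)) * z * z
      + RtoC (4 * a + 4 * b + c) * z + RtoC (sqrt 3 * (a - b)))%C
     = (RtoC (-3 * c) * (z - t1) * (z - t2) * (z - t3))%C)
  (H12 : t1 <> t2) (H23 : t2 <> t3) (H13 : t1 <> t3)
  (Om : pt3 -> Prop) (HOmopen : open Om) (HOmconn : connected3 Om)
  (HOmdist : forall p, Om p ->
     pu p <> pv p /\ pv p <> pw p /\ pu p <> pw p)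
  (HOmtheta : forall p, Om p ->
     RtoC (theta p) <> t1 /\ RtoC (theta p) <> t2 /\ RtoC (theta p) <> t3)
  (L0 L1 L2 L3 : pt3 -> C)
  (HL0 : log_branch Om (fun p => RtoC ((pu p - pv p) / sqrt 2)) L0)
  (HL1 : log_branch Om (fun p => (RtoC (theta p) - t1)%C) L1)
  (HL2 : log_branch Om (fun p => (RtoC (theta p) - t2)%C) L2)
  (HL3 : log_branch Om (fun p => (RtoC (theta p) - t3)%C) L3) :
  forall (alpha beta : R) (u v w : R -> R),
    (forall t, alpha < t < beta ->
       Om (u t, v t, w t) /\
       is_derive u t (c / (u t - v t) + b / (u t - w t)) /\
       is_derive v t (a / (v t - w t) + c / (v t - u t)) /\
       is_derive w t (b / (w t - u t) + a / (w t - v t))) ->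
    forall s t, alpha < s < beta -> alpha < t < beta ->
      hfun tp tm t1 t2 t3 L0 L1 L2 L3 (u s, v s, w s)
      = hfun tp tm t1 t2 t3 L0 L1 L2 L3 (u t, v t, w t).
Proof.
intros alpha beta u v w Hcur s0 t0 Hs Ht.
set (F := fun τ => hfun tp tm t1 t2 t3 L0 L1 L2 L3 (u τ, v τ, w τ)).
assert (KD : forall τ, alpha < τ < beta -> cder F τ 0%C).
{ intros τ Hτ.
  destruct (Hcur τ Hτ) as [HO [Du [Dv Dw]]].
  destruct (HOmdist _ HO) as [n1 [n2 n3]]. unfold pu, pv, pw in n1, n2, n3; simpl in n1, n2, n3.
  destruct (HOmtheta _ HO) as [m1 [m2 m3]].
  assert (Hloc : locally τ (fun s => alpha < s < beta)).
  { apply (open_and _ _ (open_gt alpha) (open_lt beta)). exact Hτ. }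
  assert (Hg : continuous (fun s => (u s, v s, w s)) τ).
  { apply cont_pair; [apply cont_pair|].
    - exact (ex_derive_continuous u τ (ex_intro _ _ Du)).
    - exact (ex_derive_continuous v τ (ex_intro _ _ Dv)).
    - exact (ex_derive_continuous w τ (ex_intro _ _ Dw)). }
  assert (Hc : forall L : pt3 -> C, (forall p, Om p -> continuous L p) ->
             continuous (fun s => snd (L (u s, v s, w s))) τ).
  { intros L HL. apply (continuous_comp (fun s => (u s, v s, w s)) (fun q => snd (L q))).
    - exact Hg.
    - apply continuous_comp. + apply HL, HO. + apply continuous_snd. }
  assert (DU : Derive (fun x : R => u x) τ = c / (u τ - v τ) + b / (u τ - w τ))
    by (apply is_derive_unique; exact Du).
  assert (DV : Derive (fun x : R => v x) τ = a / (v τ - w τ) + c / (v τ - u τ))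
    by (apply is_derive_unique; exact Dv).
  assert (DW : Derive (fun x : R => w x) τ = b / (w τ - u τ) + a / (w τ - v τ))
    by (apply is_derive_unique; exact Dw).
  assert (h1 : u τ - v τ <> 0) by (intro E; apply n1; lra).
  assert (h2 : u τ - w τ <> 0) by (intro E; apply n3; lra).
  assert (h3 : v τ - w τ <> 0) by (intro E; apply n2; lra).
  assert (hs3 : 0 < sqrt 3) by (apply sqrt_lt_R0; lra).
  assert (hs2 : 0 < sqrt 2) by (apply sqrt_lt_R0; lra).
  assert (G0 : cder (fun s => RtoC ((pu (u s, v s, w s) - pv (u s, v s, w s)) / sqrt 2)) τ
               (RtoC (((c / (u τ - v τ) + b / (u τ - w τ)) - (a / (v τ - w τ) + c / (v τ - u τ))) / sqrt 2))).
  { split; unfold pu, pv; simpl.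
    - auto_derive.
      + repeat split; eexists; eassumption.
      + rewrite DU, DV. toR. field. lra.
    - exact (is_derive_const _ _). }
  pose (U' := c / (u τ - v τ) + b / (u τ - w τ)).
  pose (V' := a / (v τ - w τ) + c / (v τ - u τ)).
  pose (W' := b / (w τ - u τ) + a / (w τ - v τ)).
  pose (T := ((U'+V'-2*W')*(sqrt 3*(u τ-v τ)) - (u τ+v τ-2*w τ)*(sqrt 3*(U'-V')))/(sqrt 3*(u τ-v τ))^2).
  assert (Gk : forall tk : C, cder (fun s => (RtoC (theta (u s, v s, w s)) - tk)%C) τ (RtoC T)).
  { assert (hsv : sqrt 3 * (u τ + - v τ) <> 0).
    { apply Rmult_integral_contrapositive_currified; [lra|]. intro E; apply h1; lra. }
    intro tk. split; unfold theta, pu, pv, pw; simpl.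
    - auto_derive.
      + repeat split; try (eexists; eassumption); exact hsv.
      + rewrite DU, DV, DW. unfold T, U', V', W'. toR. field.
        repeat split; try (intro E; first [apply h1; lra | apply h2; lra | apply h3; lra]). 
      all: exact (is_derive_const _ _). }
  assert (nz0 : RtoC ((pu (u τ, v τ, w τ) - pv (u τ, v τ, w τ)) / sqrt 2) <> 0%C).
  { intro E. apply (f_equal fst) in E. unfold pu, pv in E. simpl in E.
    apply h1. replace (u τ - v τ) with ((u τ - v τ)/sqrt 2 * sqrt 2) by (field; lra).
    rewrite E; ring. }
  assert (nzk : forall tk, RtoC (theta (u τ, v τ, w τ)) <> tk ->
     (RtoC (theta (u τ, v τ, w τ)) - tk)%C <> 0%C).
  { intros tk Hk E. apply Hk, Cminus_eq0, E. }
  assert (loc0 : locally τ (fun s => cexp (L0 (u s, v s, w s)) = RtoC ((pu (u s, v s, w s) - pv (u s, v s, w s)) / sqrt 2))).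
  { apply filter_imp with (2 := Hloc). intros s hs. exact (proj2 (HL0 _ (proj1 (Hcur s hs)))). }
  assert (loc1 : locally τ (fun s => cexp (L1 (u s, v s, w s)) = (RtoC (theta (u s, v s, w s)) - t1)%C)).
  { apply filter_imp with (2 := Hloc). intros s hs. exact (proj2 (HL1 _ (proj1 (Hcur s hs)))). }
  assert (loc2 : locally τ (fun s => cexp (L2 (u s, v s, w s)) = (RtoC (theta (u s, v s, w s)) - t2)%C)).
  { apply filter_imp with (2 := Hloc). intros s hs. exact (proj2 (HL2 _ (proj1 (Hcur s hs)))). }
  assert (loc3 : locally τ (fun s => cexp (L3 (u s, v s, w s)) = (RtoC (theta (u s, v s, w s)) - t3)%C)).
  { apply filter_imp with (2 := Hloc). intros s hs. exact (proj2 (HL3 _ (proj1 (Hcur s hs)))). }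
  pose proof (clogd _ (fun s => L0 (u s, v s, w s)) τ _ G0 nz0 (Hc L0 (fun p hp => proj1 (HL0 p hp))) loc0) as Z0.
  pose proof (clogd _ (fun s => L1 (u s, v s, w s)) τ _ (Gk t1) (nzk t1 m1) (Hc L1 (fun p hp => proj1 (HL1 p hp))) loc1) as Z1.
  pose proof (clogd _ (fun s => L2 (u s, v s, w s)) τ _ (Gk t2) (nzk t2 m2) (Hc L2 (fun p hp => proj1 (HL2 p hp))) loc2) as Z2.
  pose proof (clogd _ (fun s => L3 (u s, v s, w s)) τ _ (Gk t3) (nzk t3 m3) (Hc L3 (fun p hp => proj1 (HL3 p hp))) loc3) as Z3.
  pose proof (cder_minus _ _ _ _ _ (cder_minus _ _ _ _ _ (cder_minus _ _ _ _ _
     (cder_cmul ((t1 - t2) * (t2 - t3) * (t3 - t1))%C _ _ _ Z0)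
     (cder_cmul ((t1 - tp) * (t2 - t3) * (t1 - tm))%C _ _ _ Z1))
     (cder_cmul ((t2 - tp) * (t2 - tm) * (t3 - t1))%C _ _ _ Z2))
     (cder_cmul ((t1 - t2) * (t3 - tp) * (t3 - tm))%C _ _ _ Z3)) as DF.
  apply (cder_eq _ _ _ _ DF).
  unfold pu, pv. cbv beta. cbn [fst snd].
  assert (hq : (u τ - v τ)/sqrt 2 <> 0).
  { intro E. apply h1. replace (u τ - v τ) with ((u τ - v τ)/sqrt 2 * sqrt 2) by (field; lra).
    rewrite E; ring. }
  rewrite <- RtoC_div by exact hq.
  match goal with |- context [RtoC (?x / sqrt 2 / ((u τ - v τ) / sqrt 2))] =>
    replace (x / sqrt 2 / ((u τ - v τ) / sqrt 2)) with (x / (u τ - v τ)) by (field; lra) end.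
  pose proof (HR a b c (u τ) (v τ) (w τ) h1 h2 h3) as HRr. cbv zeta in HRr.
  exact (Cfinal a b c (theta (u τ, v τ, w τ)) _ T tp tm t1 t2 t3 hc Hquad Hcubic HRr m1 m2 m3). }
assert (E1 := const_on (fun τ => fst (F τ)) alpha beta (fun τ h => proj1 (KD τ h)) s0 t0 Hs Ht).
assert (E2 := const_on (fun τ => snd (F τ)) alpha beta (fun τ h => proj2 (KD τ h)) s0 t0 Hs Ht).
change (F s0 = F t0). apply injective_projections; assumption.
Qed.
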